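(* Consider the Normal Partizan Domination game on the complete bipartite graph $K_{s,t}$ with parts $S$ and $T$, $|S|=s\geq 2$, $|T|=t\geq 2$, each vertex colored $A$, $B$ or $C$. If every vertex of $S\cup T$ has color $A$ (resp. $B$), the value is $\max\{s,t\}$ (resp. $-\max\{s,t\}$). If each of $S$ and $T$ contains (i) at least one vertex of color $C$ or (ii) at least one vertex of color $A$ and at least one vertex of color $B$, then the value is $0$. If every vertex of $S$ has color $A$ (resp. $B$) and every vertex of $T$ has color $B$ (resp. $A$), then the value is $0$.
   Context: Normal Partizan Domination game: a finite graph $G$ has each vertex colored $A$, $B$ or $C$. Alice and Bob alternately select a vertex; Alice may only select vertices colored $A$ or $C$, Bob only vertices colored $B$ or $C$. A vertex $u$ dominates $v$ if $u=v$ or $uv$ is an edge. A vertex may be selected only if it is playable, i.e. it dominates at least one vertex not dominated by the previously selected vertices; the game ends when the selected vertices form a dominating set. Under normal play the player unable to move loses. The game is regarded as a partizan combinatorial game with Alice as Left and Bob as Right, and its value is its value in Conway's combinatorial game theory ($\{X\mid Y\}$ has Left options $X$ and Right options $Y$; $G=H$ iff $G+(-H)$ is a second-player win; integers $n$ are the usual integer games, $0=\{\mid\}$). *)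

(* Defs.v *)
From mathcomp Require Import all_boot.
Set Implicit Arguments. Unset Strict Implicit. Unset Printing Implicit Defensive.

Inductive game : Type := Game : seq game -> seq game -> game.

Definition lopts (G : game) := let: Game L _ := G in L.
Definition ropts (G : game) := let: Game _ R := G in R.

(** outcome G = (Left moving first wins, Right moving first wins),
    under normal play (player unable to move loses). *)
Fixpoint outcome (G : game) : bool * bool :=
  let: Game L R := G in
  ((fix exL (l : seq game) : bool :=
      if l is g :: l' then ~~ (outcome g).2 || exL l' else false) L,
   (fix exR (l : seq game) : bool :=
      if l is g :: l' then ~~ (outcome g).1 || exR l' else false) R).

Definition second_player_win (G : game) : bool :=
  ~~ (outcome G).1 && ~~ (outcome G).2.

Fixpoint gneg (G : game) : game :=
  let: Game L R := G in Game (map gneg R) (map gneg L).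

Fixpoint gadd (G : game) : game -> game :=
  fix addG (H : game) : game :=
    let: Game GL GR := G in
    let: Game HL HR := H in
    Game ([seq gadd g H | g <- GL] ++ [seq addG h | h <- HL])
         ([seq gadd g H | g <- GR] ++ [seq addG h | h <- HR]).

Definition game_eq (G H : game) : Prop := second_player_win (gadd G (gneg H)).

Fixpoint nat_game (n : nat) : game :=
  if n is m.+1 then Game [:: nat_game m] [::] else Game [::] [::].

Inductive color := CA | CB | CC.

Definition alice_may (c : color) : bool := if c is CB then false else true.
Definition bob_may (c : color) : bool := if c is CA then false else true.

Section Domination.
Variables (V : finType) (e : rel V) (col : V -> color).

Definition dominates (u v : V) : bool := (u == v) || e u v.

(** v is playable when X is the set of previously selected vertices *)
Definition playable (X : {set V}) (v : V) : bool :=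
  [exists u, dominates v u && ~~ [exists x in X, dominates x u]].

(** Game tree from position X, with fuel n (each move strictly enlarges the
    dominated set, so fuel #|V| is enough to build the whole tree). *)
Fixpoint dom_game_from (n : nat) (X : {set V}) : game :=
  if n is m.+1 then
    Game [seq dom_game_from m (v |: X) | v <- enum V & alice_may (col v) && playable X v]
         [seq dom_game_from m (v |: X) | v <- enum V & bob_may (col v) && playable X v]
  else Game [::] [::].

Definition dom_game : game := dom_game_from #|V| set0.
End Domination.

(** Complete bipartite graph K_{s,t}: parts S = inl-vertices, T = inr-vertices. *)
Definition Kst_vertex (s t : nat) : finType := ('I_s + 'I_t)%type.
Definition Kst_edge (s t : nat) : rel (Kst_vertex s t) :=
  fun x y => match x, y with
             | inl _, inr _ | inr _, inl _ => true
             | _, _ => false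
             end.

(* Main.v *)
Require Import Defs.
From mathcomp Require Import all_boot zify.
Set Implicit Arguments. Unset Strict Implicit. Unset Printing Implicit Defensive.

Fixpoint Fall (P : game -> Prop) (l : seq game) : Prop :=
  if l is g :: l' then P g /\ Fall P l' else True.

Fixpoint game_ind' (P : game -> Prop)
  (H : forall L R, Fall P L -> Fall P R -> P (Game L R)) (G : game) : P G :=
  match G with Game L R =>
    H L R
      ((fix fl (l : seq game) : Fall P l :=
          match l as l0 return Fall P l0 with
          | [::] => I | g :: l' => conj (game_ind' H g) (fl l') end) L)
      ((fix fl (l : seq game) : Fall P l :=
          match l as l0 return Fall P l0 with
          | [::] => I | g :: l' => conj (game_ind' H g) (fl l') end) R)
  end.

Lemma outcomeE L R : outcome (Game L R) =
  (has (fun g => ~~ (outcome g).2) L, has (fun g => ~~ (outcome g).1) R).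
Proof. by rewrite /=; congr pair. Qed.

Lemma Fall_has (a b : pred game) l : Fall (fun g => a g = b g) l -> has a l = has b l.
Proof. by elim: l => //= g l IH [-> /IH ->]. Qed.

Lemma Fall_map T (f f' : game -> T) l : Fall (fun g => f g = f' g) l -> map f l = map f' l.
Proof. by elim: l => //= g l IH [-> /IH ->]. Qed.

Lemma Fall_impl (P Q : game -> Prop) l : (forall g, P g -> Q g) -> Fall P l -> Fall Q l.
Proof. by move=> PQ; elim: l => //= g l IH [/PQ ? /IH ?]. Qed.

Lemma Fall_mp (p : pred game) (Q : game -> Prop) l :
  Fall (fun g => p g -> Q g) l -> all p l -> Fall Q l.
Proof. by elim: l => //= g l IH [H1 H2] /andP [/H1 ? /(IH H2) ?]. Qed.

Definition zero := Game [::] [::].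

Lemma gadd0 G : outcome (gadd G zero) = outcome G.
Proof.
elim/game_ind': G => L R IHL IHR.
have -> : gadd (Game L R) zero = Game (map (gadd^~ zero) L) (map (gadd^~ zero) R).
  by rewrite /= !cats0.
rewrite !outcomeE !has_map.
congr pair; apply: Fall_has.
  by apply: Fall_impl IHL => g /= ->.
by apply: Fall_impl IHR => g /= ->.
Qed.

Lemma outcome_neg G : outcome (gneg G) = ((outcome G).2, (outcome G).1).
Proof.
elim/game_ind': G => L R IHL IHR.
rewrite [gneg _]/= !outcomeE !has_map.
congr pair; apply: Fall_has.
  by apply: Fall_impl IHR => g /= ->.
by apply: Fall_impl IHL => g /= ->.
Qed.

Lemma gaddE GL GR HL HR : gadd (Game GL GR) (Game HL HR) =
  Game (map (gadd^~ (Game HL HR)) GL ++ map (gadd (Game GL GR)) HL)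
       (map (gadd^~ (Game HL HR)) GR ++ map (gadd (Game GL GR)) HR).
Proof. by []. Qed.

Lemma gnegE L R : gneg (Game L R) = Game (map gneg R) (map gneg L).
Proof. by []. Qed.

Lemma neg_add G H : gneg (gadd G H) = gadd (gneg G) (gneg H).
Proof.
elim/game_ind': G H => GL GR IHGL IHGR.
elim/game_ind' => HL HR IHHL IHHR.
rewrite gaddE !gnegE gaddE !map_cat -!map_comp; congr Game; congr cat;
  apply: Fall_map.
- by apply: Fall_impl IHGR => g /= ->.
- by apply: Fall_impl IHHR => g /= ->.
- by apply: Fall_impl IHGL => g /= ->.
- by apply: Fall_impl IHHL => g /= ->.
Qed.

Fixpoint lheight (G : game) : nat :=
  let: Game L _ := G in foldr (fun g m => maxn (lheight g).+1 m) 0 L.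
Fixpoint lonly (G : game) : bool := let: Game L R := G in nilp R && all lonly L.

Lemma lheightE L R : lheight (Game L R) = foldr (fun g m => maxn (lheight g).+1 m) 0 L.
Proof. by []. Qed.

Lemma ltn_foldr_max T (f : T -> nat) l n :
  (n < foldr (fun g m => maxn (f g) m) 0 l) = has (fun g => n < f g) l.
Proof. by elim: l => //= g l <-; rewrite leq_max. Qed.

Lemma foldr_max_leq T (f : T -> nat) l n :
  (foldr (fun g m => maxn (f g) m) 0 l <= n) = all (fun g => f g <= n) l.
Proof. by elim: l => //= g l <-; rewrite geq_max. Qed.

Lemma lheight_gt n L R : (n < lheight (Game L R)) = has (fun g => n < (lheight g).+1) L.
Proof. by rewrite lheightE ltn_foldr_max. Qed.

Lemma gadd_LR L HR : gadd (Game L [::]) (Game [::] HR) =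
  Game (map (gadd^~ (Game [::] HR)) L) (map (gadd (Game L [::])) HR).
Proof. by rewrite gaddE /= cats0. Qed.

Lemma lonly_val G : lonly G -> forall n,
  outcome (gadd G (gneg (nat_game n))) = (n < lheight G, lheight G < n).
Proof.
elim/game_ind': G => L R IHL _ /andP [/nilP -> alL].
have IH := Fall_mp IHL alL.
elim=> [|n IHn].
  rewrite (_ : gneg (nat_game 0) = Game [::] [::]) // ltn0 lheight_gt gadd_LR outcomeE.
  congr pair; rewrite has_map.
  apply: Fall_has; apply: Fall_impl IH => g /(_ 0) H.
  by rewrite /= -[Game [::] [::]]/(gneg (nat_game 0)) H.
rewrite (_ : gneg (nat_game n.+1) = Game [::] [:: gneg (nat_game n)]) // gadd_LR.
rewrite outcomeE lheight_gt; congr pair.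
  rewrite has_map.
  apply: Fall_has; apply: Fall_impl IH => g /(_ n.+1) H.
  by rewrite /= -[Game [::] [:: _]]/(gneg (nat_game n.+1)) H /= -leqNgt.
rewrite [has _ _]/=. change (~~ (outcome (gadd (Game L [::]) (gneg (nat_game n)))).1 || false = (lheight (Game L [::]) < n.+1)).
by rewrite IHn orbF -leqNgt ltnS.
Qed.

Definition undom (V : finType) (e : rel V) (X : {set V}) :=
  [set u | ~~ [exists x in X, dominates e x u]].

Lemma dgE (V : finType) (e : rel V) col k X :
  dom_game_from e col k.+1 X =
  Game [seq dom_game_from e col k (v |: X) | v <- enum V & alice_may (col v) && playable e X v]
       [seq dom_game_from e col k (v |: X) | v <- enum V & bob_may (col v) && playable e X v].
Proof. by []. Qed.

Lemma in_undomU (V : finType) (e : rel V) v X u :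
  (u \in undom e (v |: X)) = ~~ dominates e v u && (u \in undom e X).
Proof.
rewrite !inE -negb_or; congr negb; apply/existsP/orP.
  case=> x /andP [/setU1P [->|xX] d]; first by left.
  by right; apply/existsP; exists x; rewrite xX.
case=> [d|/existsP [x /andP [xX d]]].
  by exists v; rewrite setU11 d.
by exists x; rewrite setU1r.
Qed.

Lemma playableE (V : finType) (e : rel V) X v :
  playable e X v = [exists u, dominates e v u && (u \in undom e X)].
Proof. by apply: eq_existsb => u; rewrite inE. Qed.

Lemma height_ub (V : finType) (e : rel V) col k X :
  lheight (dom_game_from e col k X) <= #|undom e X|.
Proof.
elim: k X => [|k IH] X; first by [].
rewrite dgE lheightE foldr_max_leq all_map all_filter; apply/allP => v _.
apply/implyP => /andP [_ pv].
apply: leq_ltn_trans (IH _) _.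
apply: proper_card; apply/properP; split.
  by apply/subsetP => u; rewrite in_undomU => /andP [].
move: pv; rewrite playableE => /existsP [u /andP [d nd]].
by exists u; rewrite // in_undomU d.
Qed.

Lemma nomove (V : finType) (e : rel V) col k X :
  (forall v, ~~ playable e X v) -> dom_game_from e col k X = Game [::] [::].
Proof.
move=> H; case: k => // k; rewrite dgE.
have F (p : pred V) : [seq v <- enum V | p v && playable e X v] = [::].
  apply/eqP; rewrite -(negbK (_ == _)) -has_filter; apply/hasPn => v _.
  by rewrite (negbTE (H v)) andbF.
by rewrite !F.
Qed.

Lemma height_lb (V : finType) (e : rel V) col (P : {set V}) :
  (forall u w, u \in P -> w \in P -> u != w -> ~~ e u w) ->
  (forall v, v \in P -> alice_may (col v)) ->
  forall k (X : {set V}), X \subset P -> minn k (#|P| - #|X|) <= lheight (dom_game_from e col k X).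
Proof.
move=> Pind PA; elim=> [|k IH] X XP; first by rewrite min0n.
have [le|lt] := leqP #|P| #|X|.
  by rewrite (_ : #|P| - #|X| = 0) ?minn0 //; apply/eqP; rewrite subn_eq0.
have /set0Pn [v vPX] : P :\: X != set0.
  apply: contraTneq lt => /eqP; rewrite setD_eq0 => /subset_leq_card.
  by rewrite -leqNgt.
move: vPX; rewrite inE => /andP [vX vP].
have pv : playable e X v.
  rewrite playableE; apply/existsP; exists v; rewrite /dominates eqxx /= inE.
  apply/existsP => -[x /andP [xX]]; rewrite /dominates.
  have xv : x != v by apply: contraNneq vX => <-.
  by rewrite (negbTE xv) (negbTE (Pind _ _ (subsetP XP _ xX) vP xv)).
have IHv := IH (v |: X) (_ : _).
rewrite (_ : #|P| - #|X| = (#|P| - #|v |: X|).+1); last first.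
  by rewrite cardsU1 vX /=; lia.
rewrite minnSS dgE lheight_gt has_map; apply/hasP; exists v.
  by rewrite mem_filter pv (PA v vP) mem_enum.
by rewrite /= ltnS IHv // subUset sub1set vP XP.
Qed.

Lemma other n (hn : 2 <= n) (i : 'I_n) : exists i', i' != i.
Proof.
have : 0 < #|[set~ i]| by rewrite cardsC1 card_ord; lia.
by case/card_gt0P => i'; rewrite !inE => ?; exists i'.
Qed.

Lemma play_opp s t (hs : 2 <= s) (ht : 2 <= t) (v w : Kst_vertex s t) :
  Kst_edge v w -> playable (@Kst_edge s t) (v |: set0) w.
Proof.
case: v w => [i|j] [i'|j'] //= _.
  have [i2 ne] := other hs i.
  apply/existsP; exists (inl i2); rewrite /dominates /=.
  apply/negP => /existsP [x]; rewrite setU0 inE => /andP [/eqP -> /=].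
  by rewrite /dominates /= orbF inj_eq //; [rewrite eq_sym (negbTE ne) | apply: inl_inj].
have [j2 ne] := other ht j.
apply/existsP; exists (inr j2); rewrite /dominates /=.
apply/negP => /existsP [x]; rewrite setU0 inE => /andP [/eqP -> /=].
by rewrite /dominates /= orbF inj_eq //; [rewrite eq_sym (negbTE ne) | apply: inr_inj].
Qed.

Lemma none_play s t (v w : Kst_vertex s t) :
  Kst_edge v w -> forall u, ~~ playable (@Kst_edge s t) (w |: (v |: set0)) u.
Proof.
move=> vw u; apply/existsP => -[u' /andP [_ /negP]]; apply; apply/existsP.
case: v w vw u' => [i|j] [i'|j'] // _ [k|k].
- by exists (inr j'); rewrite !inE eqxx /= /dominates orbT.
- by exists (inl i); rewrite !inE eqxx orbT /= /dominates orbT.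
- by exists (inr j); rewrite !inE eqxx orbT /= /dominates orbT.
- by exists (inl i'); rewrite !inE eqxx /= /dominates orbT.
Qed.

Lemma outcome1E L R : (outcome (Game L R)).1 = has (fun g => ~~ (outcome g).2) L.
Proof. by rewrite outcomeE. Qed.
Lemma outcome2E L R : (outcome (Game L R)).2 = has (fun g => ~~ (outcome g).1) R.
Proof. by rewrite outcomeE. Qed.

Lemma card_Kst s t (hs : 2 <= s) (ht : 2 <= t) : exists n, #|Kst_vertex s t| = n.+2.
Proof. by exists (s + t - 2); rewrite card_sum !card_ord; lia. Qed.

Lemma zero_game s t (hs : 2 <= s) (ht : 2 <= t) (col : Kst_vertex s t -> color) :
  (forall v, alice_may (col v) -> exists w, Kst_edge v w && bob_may (col w)) ->
  (forall v, bob_may (col v) -> exists w, Kst_edge v w && alice_may (col w)) ->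
  game_eq (dom_game (@Kst_edge s t) col) (nat_game 0).
Proof.
move=> HA HB; rewrite /game_eq /second_player_win (_ : gneg (nat_game 0) = zero) // gadd0.
rewrite /dom_game; have [n ->] := card_Kst hs ht.
rewrite dgE outcomeE; apply/andP; split;
  [change (~~ has (fun g => ~~ (outcome g).2) [seq dom_game_from (@Kst_edge s t) col n.+1 (v |: set0) | v <- enum (Kst_vertex s t) & alice_may (col v) && playable (@Kst_edge s t) set0 v])
  |change (~~ has (fun g => ~~ (outcome g).1) [seq dom_game_from (@Kst_edge s t) col n.+1 (v |: set0) | v <- enum (Kst_vertex s t) & bob_may (col v) && playable (@Kst_edge s t) set0 v])];
  rewrite has_map; apply/hasPn => v.
  rewrite mem_filter => /andP [/andP [cv _] _]; apply/negPn.
  case: (HA v cv) => w /andP [vw bw]; rewrite dgE outcome2E.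
  rewrite has_map; apply/hasP; exists w; first by rewrite mem_filter bw play_opp // mem_enum.
  by rewrite /= nomove //; apply: none_play.
rewrite mem_filter => /andP [/andP [cv _] _]; apply/negPn.
case: (HB v cv) => w /andP [vw bw]; rewrite dgE outcome1E.
rewrite has_map; apply/hasP; exists w; first by rewrite mem_filter bw play_opp // mem_enum.
by rewrite /= nomove //; apply: none_play.
Qed.

Lemma filter_nil (V : finType) (p q : pred V) :
  (forall v, ~~ p v) -> [seq v <- enum V | p v && q v] = [::].
Proof.
move=> H; apply/eqP; rewrite -(negbK (_ == _)) -has_filter; apply/hasPn => v _.
by rewrite (negbTE (H v)).
Qed.

Lemma lonly_dg (V : finType) (e : rel V) col k X :
  (forall v, ~~ bob_may (col v)) -> lonly (dom_game_from e col k X).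
Proof.
move=> H; elim: k X => [|k IH] X //.
rewrite dgE /= filter_nil //=; rewrite all_map; apply/allP => v _; exact: IH.
Qed.

Lemma dg_neg (V : finType) (e : rel V) col k X : (forall v, col v = CB) ->
  dom_game_from e col k X = gneg (dom_game_from e (fun _ => CA) k X).
Proof.
move=> H; elim: k X => [|k IH] X //.
rewrite !dgE gnegE (filter_nil (p := fun v => alice_may (col v))); last by move=> v; rewrite H.
rewrite (filter_nil (p := fun=> bob_may CA)) //; congr Game.
rewrite -map_comp (eq_map (fun v => IH (v |: X))); congr map.
by apply: eq_filter => v; rewrite H.
Qed.

Lemma undom_inl s t (i : 'I_s) :
  #|undom (@Kst_edge s t) (inl i |: set0)| <= s.-1.
Proof.
have <- : #|(@inl 'I_s 'I_t) @: [set~ i]| = s.-1.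
  by rewrite card_imset ?cardsC1 ?card_ord //; apply: inl_inj.
apply: subset_leq_card; apply/subsetP => -[k|k]; rewrite in_undomU /dominates /=.
  rewrite orbF => /andP [ne _]; apply/imsetP; exists k => //.
  by rewrite !inE eq_sym; move: ne; rewrite (inj_eq (@inl_inj _ _)).
by [].
Qed.

Lemma undom_inr s t (j : 'I_t) :
  #|undom (@Kst_edge s t) (inr j |: set0)| <= t.-1.
Proof.
have <- : #|(@inr 'I_s 'I_t) @: [set~ j]| = t.-1.
  by rewrite card_imset ?cardsC1 ?card_ord //; apply: inr_inj.
apply: subset_leq_card; apply/subsetP => -[k|k]; rewrite in_undomU /dominates /=.
  by [].
rewrite orbF => /andP [ne _]; apply/imsetP; exists k => //.
by rewrite !inE eq_sym; move: ne; rewrite (inj_eq (@inr_inj _ _)).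
Qed.

Lemma heightA s t (hs : 2 <= s) (ht : 2 <= t) (col : Kst_vertex s t -> color) :
  (forall v, col v = CA) -> lheight (dom_game (@Kst_edge s t) col) = maxn s t.
Proof.
move=> H; apply/eqP; rewrite eqn_leq; apply/andP; split.
  rewrite /dom_game; have [n ->] := card_Kst hs ht.
  rewrite dgE lheightE foldr_max_leq all_map; apply/allP => v _.
  change ((lheight (dom_game_from (@Kst_edge s t) col n.+1 (v |: set0))).+1 <= maxn s t).
  apply: leq_ltn_trans (height_ub (@Kst_edge s t) col n.+1 (v |: set0)) _.
  case: v => [i|j].
    by apply: leq_ltn_trans (undom_inl _ _) _; lia.
  by apply: leq_ltn_trans (undom_inr _ _) _; lia.
have col' v : alice_may (col v) by rewrite H.
rewrite geq_max /dom_game.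
have -> : #|Kst_vertex s t| = s + t by rewrite card_sum !card_ord.
apply/andP; split.
  have := @height_lb _ (@Kst_edge s t) col ((@inl 'I_s 'I_t) @: setT) _ (fun v _ => col' v) (s + t) set0 (sub0set _).
  rewrite card_imset ?cardsT ?card_ord ?cards0; last exact: inl_inj.
  rewrite subn0 minnC (minn_idPl _) ?leq_addr //; apply.
  by move=> u w /imsetP [a _ ->] /imsetP [b _ ->].
have := @height_lb _ (@Kst_edge s t) col ((@inr 'I_s 'I_t) @: setT) _ (fun v _ => col' v) (s + t) set0 (sub0set _).
rewrite card_imset ?cardsT ?card_ord ?cards0; last exact: inr_inj.
rewrite subn0 minnC (minn_idPl _) ?leq_addl //; apply.
by move=> u w /imsetP [a _ ->] /imsetP [b _ ->].
Qed.
Unset Implicit Arguments.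

Theorem theorem4 (s t : nat) (hs : 2 <= s) (ht : 2 <= t)
    (col : Kst_vertex s t -> color) :
  let G := dom_game (Kst_edge (s:=s) (t:=t)) col in
  (* all A / all B *)
  ((forall v, col v = CA) -> game_eq G (nat_game (maxn s t))) /\
  ((forall v, col v = CB) -> game_eq G (gneg (nat_game (maxn s t)))) /\
  (* each side contains a C, or both an A and a B *)
  (((exists i : 'I_s, col (inl i) = CC) \/
      ((exists i : 'I_s, col (inl i) = CA) /\ (exists i : 'I_s, col (inl i) = CB))) ->
   ((exists j : 'I_t, col (inr j) = CC) \/
      ((exists j : 'I_t, col (inr j) = CA) /\ (exists j : 'I_t, col (inr j) = CB))) ->
   game_eq G (nat_game 0)) /\
  (* S all A and T all B, or vice versa *)
  ((forall i : 'I_s, col (inl i) = CA) -> (forall j : 'I_t, col (inr j) = CB) ->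
   game_eq G (nat_game 0)) /\
  ((forall i : 'I_s, col (inl i) = CB) -> (forall j : 'I_t, col (inr j) = CA) ->
   game_eq G (nat_game 0)).
Proof.
move=> G; rewrite /G.
have i0 : 'I_s := Ordinal (leq_trans (isT : 0 < 2) hs).
have j0 : 'I_t := Ordinal (leq_trans (isT : 0 < 2) ht).
split.
  move=> H; rewrite /game_eq /second_player_win lonly_val; last first.
    by apply: lonly_dg => v; rewrite H.
  by rewrite heightA // ltnn.
split.
  move=> H.
  have E : dom_game (@Kst_edge s t) col = gneg (dom_game (@Kst_edge s t) (fun _ => CA)).
    by rewrite /dom_game; apply: dg_neg.
  rewrite E /game_eq -neg_add /second_player_win outcome_neg lonly_val; last first.
    by apply: lonly_dg.
  by rewrite heightA // ltnn.
split.
  move=> hS hT; apply: zero_game => //.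
    case=> [i|j] _.
      have [j cj] : exists j, bob_may (col (inr j)).
        by case: hT => [[j cj]|[_ [j cj]]]; exists j; rewrite cj.
      by exists (inr j).
    have [i cj] : exists i, bob_may (col (inl i)).
      by case: hS => [[i cj]|[_ [i cj]]]; exists i; rewrite cj.
    by exists (inl i).
  case=> [i|j] _.
    have [j cj] : exists j, alice_may (col (inr j)).
      by case: hT => [[j cj]|[[j cj] _]]; exists j; rewrite cj.
    by exists (inr j).
  have [i cj] : exists i, alice_may (col (inl i)).
    by case: hS => [[i cj]|[[i cj] _]]; exists i; rewrite cj.
  by exists (inl i).
split.
  move=> hS hT; apply: zero_game => //.
    case=> [i|j]; last by rewrite hT.
    by move=> _; exists (inr j0); rewrite /= hT.
  case=> [i|j]; first by rewrite hS.
  by move=> _; exists (inl i0); rewrite /= hS.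
move=> hS hT; apply: zero_game => //.
  case=> [i|j]; first by rewrite hS.
  by move=> _; exists (inl i0); rewrite /= hS.
case=> [i|j]; last by rewrite hT.
by move=> _; exists (inr j0); rewrite /= hT.
Qed.
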